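(* Let $(X,r)$ be a finite solution of the YBE. Suppose that for some prime divisor $p$ of $|\mathcal G(X,r)|$, the group $\mathcal G(X,r)$ has an abelian normal Sylow $p$-subgroup. Then $(X,r)$ is retractable, i.e. there exist distinct $x,y\in X$ with $\sigma_x=\sigma_y$.
   Context: A solution of the Yang–Baxter equation (YBE) is a pair $(X,r)$, where $X$ is a non-empty set and $r\colon X\times X\to X\times X$, written $r(x,y)=(\sigma_x(y),\gamma_y(x))$, satisfies: $r^2=\mathrm{id}$; all maps $\sigma_x,\gamma_y\colon X\to X$ are bijections; and $r_{12}r_{23}r_{12}=r_{23}r_{12}r_{23}$ as maps $X^3\to X^3$, where $r_{12}=r\times\mathrm{id}_X$ and $r_{23}=\mathrm{id}_X\times r$. The permutation group of $(X,r)$ is $\mathcal G(X,r)=\langle \sigma_x : x\in X\rangle\le \mathrm{Sym}_X$ (a group under composition). *)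

(* Defs.v *)
From mathcomp Require Import all_boot all_fingroup all_solvable.
Set Implicit Arguments. Unset Strict Implicit. Unset Printing Implicit Defensive.

Definition sigma (X : finType) (r : X * X -> X * X) (x : X) : X -> X :=
  fun y => (r (x, y)).1.
Definition gamma (X : finType) (r : X * X -> X * X) (y : X) : X -> X :=
  fun x => (r (x, y)).2.

Definition r12 (X : Type) (r : X * X -> X * X) (t : X * X * X) : X * X * X :=
  let: (a, b, c) := t in let: (a', b') := r (a, b) in (a', b', c).
Definition r23 (X : Type) (r : X * X -> X * X) (t : X * X * X) : X * X * X :=
  let: (a, b, c) := t in let: (b', c') := r (b, c) in (a, b', c').

Definition is_YB_solution (X : finType) (r : X * X -> X * X) : Prop :=
  [/\ 0 < #|X|,
      (forall t, r (r t) = t),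
      (forall x, bijective (sigma r x)),
      (forall y, bijective (gamma r y)) &
      (forall t, r12 r (r23 r (r12 r t)) = r23 r (r12 r (r23 r t)))].

Definition sigma_perms (X : finType) (r : X * X -> X * X) : {set {perm X}} :=
  [set s : {perm X} | [exists x, [forall y, s y == sigma r x y]]].

Definition perm_group_YB (X : finType) (r : X * X -> X * X) : {group {perm X}} :=
  <<sigma_perms r>>%G.

Definition retractable (X : finType) (r : X * X -> X * X) : Prop :=
  exists x y : X, x <> y /\ sigma r x = sigma r y.

(* Main.v *)
Require Import Defs.
From mathcomp Require Import all_boot all_fingroup all_solvable.
From Stdlib Require Import ClassicalEpsilon FunctionalExtensionality.
Set Implicit Arguments. Unset Strict Implicit. Unset Printing Implicit Defensive.
Local Open Scope group_scope.

Section YB.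
Variable X : finType.
Variable r : X * X -> X * X.
Hypothesis hinv : forall t, r (r t) = t.
Hypothesis hsig : forall x, bijective (sigma r x).
Hypothesis hybe : forall t, Defs.r12 r (Defs.r23 r (Defs.r12 r t)) = Defs.r23 r (Defs.r12 r (Defs.r23 r t)).

Definition sp x : {perm X} := perm (bij_inj (hsig x)).
Lemma spE x y : sp x y = sigma r x y. Proof. by rewrite permE. Qed.

Lemma L1 x y z : sigma r (sigma r x y) (sigma r (gamma r y x) z) = sigma r x (sigma r y z).
Proof.
have := hybe (x, y, z); rewrite /Defs.r12 /Defs.r23 /sigma /gamma.
case E1: (r (x, y)) => [a b]; case E2: (r (b, z)) => [c d]; case E3: (r (a, c)) => [e f].
case E4: (r (y, z)) => [g h]; case E5: (r (x, g)) => [i j]; case E6: (r (j, h)) => [k l].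
by case=> -> _ _ /=.
Qed.

Lemma L2 x y : sigma r (sigma r x y) (gamma r y x) = x.
Proof. by rewrite /sigma /gamma -surjective_pairing hinv. Qed.

Lemma key u v : sp ((sp u)^-1 v) * sp u = sp ((sp v)^-1 u) * sp v.
Proof.
apply/permP => z; rewrite !permM.
set y := (sp u)^-1 v.
have hv : v = sp u y by rewrite /y permKV.
have hg : gamma r y u = (sp v)^-1 u.
  by apply: (perm_inj (s := sp v)); rewrite permKV hv !spE L2.
rewrite -hg !spE hv spE -L1 //.
Qed.

Definition Phi (s : seq X) : {perm X} := foldl (fun (g : {perm X}) y => sp ((g^-1)%g y) * g) 1 s.

Lemma Phi_rcons s y : Phi (rcons s y) = sp ((Phi s)^-1 y) * Phi s.
Proof. by rewrite /Phi foldl_rcons. Qed.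

Lemma Phi_nil : Phi [::] = 1. Proof. by []. Qed.

Lemma Phi1 x : Phi [:: x] = sp x.
Proof. by rewrite /Phi /= invg1 perm1 mulg1. Qed.

Lemma Phi_swap s y z : Phi (rcons (rcons s y) z) = Phi (rcons (rcons s z) y).
Proof.
rewrite !Phi_rcons; set g := Phi s.
rewrite !invMg !permM !mulgA; congr (_ * _).
by have := key ((g^-1 : {perm X}) y) ((g^-1 : {perm X}) z).
Qed.

Lemma Phi_rcons_eq s t y : Phi s = Phi t -> Phi (rcons s y) = Phi (rcons t y).
Proof. by rewrite !Phi_rcons => ->. Qed.

Lemma Phi_move t1 t2 y : Phi (t1 ++ y :: t2) = Phi (rcons (t1 ++ t2) y).
Proof.
elim/last_ind: t2 => [|t2 z IH]; first by rewrite cats1 cats0.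
rewrite -rcons_cons -!rcons_cat (Phi_rcons_eq z IH) Phi_swap.
by rewrite rcons_cat.
Qed.

Lemma Phi_perm s t : perm_eq s t -> Phi s = Phi t.
Proof.
elim/last_ind: s t => [|s y IH] t.
  by move=> /perm_size; case: t.
move=> hp.
have : y \in t by rewrite -(perm_mem hp) mem_rcons mem_head.
move=> /splitPr hs; case: hs hp => t1 t2 hp.
rewrite Phi_move; apply: Phi_rcons_eq; apply: IH.
have : perm_eq (y :: s) (y :: (t1 ++ t2)).
  rewrite -(perm_rcons y s) (perm_trans hp) //.
  by rewrite -cat1s perm_catCA.
by rewrite perm_cons.
Qed.

Lemma Phi_cat s t : Phi (s ++ t) = Phi (map (Phi s)^-1 t) * Phi s.
Proof.
elim/last_ind: t => [|t y IH]; first by rewrite cats0 Phi_nil mul1g.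
rewrite -rcons_cat map_rcons !Phi_rcons IH invMg permM mulgA //.
Qed.


Let G := perm_group_YB r.

Lemma sp_in x : sp x \in G.
Proof.
apply: mem_gen; rewrite inE; apply/existsP; exists x; apply/forallP => y.
by rewrite spE.
Qed.

Lemma sigma_permsP g : g \in sigma_perms r -> exists x, g = sp x.
Proof.
rewrite inE => /existsP [x /forallP h]; exists x; apply/permP => y.
by rewrite spE; apply/eqP.
Qed.

Lemma Phi_in s : Phi s \in G.
Proof.
elim/last_ind: s => [|s y IH]; first exact: group1.
by rewrite Phi_rcons groupM // sp_in.
Qed.

Lemma Phi_cons x t : Phi (x :: t) = Phi (map (sp x)^-1 t) * sp x.
Proof. by rewrite -cat1s Phi_cat Phi1. Qed.

Lemma Phi_onto g : g \in G -> exists s, Phi s = g.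
Proof.
case/gen_prodgP => n [c hc ->] {g}.
elim: n c hc => [|n IH] c hc; first by exists [::]; rewrite big_ord0.
rewrite big_ord_recr /=.
have [s hs] := IH (fun i => c (widen_ord (leqnSn n) i)) (fun i => hc _).
have [x hx] := sigma_permsP (hc ord_max).
exists (x :: map (sp x) s).
by rewrite Phi_cons (mapK (permK (sp x))) hs hx.
Qed.

Definition pre (g : {perm X}) : seq X := epsilon (inhabits [::]) (fun s => Phi s = g).

Lemma preP g : g \in G -> Phi (pre g) = g.
Proof. by move=> hg; apply: (epsilon_spec (inhabits [::]) (fun s => Phi s = g)); apply: Phi_onto. Qed.

Definition add (a b : {perm X}) := Phi (pre a ++ pre b).

Lemma Phi_cat_l s s' t : Phi s = Phi s' -> Phi (s ++ t) = Phi (s' ++ t).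
Proof. by rewrite !Phi_cat => ->. Qed.

Lemma Phi_cat_r s t t' : Phi t = Phi t' -> Phi (s ++ t) = Phi (s ++ t').
Proof.
move=> h; rewrite (Phi_perm (permEl (perm_catC s t))) (Phi_perm (permEl (perm_catC s t'))).
exact: Phi_cat_l.
Qed.

Lemma addE s t : add (Phi s) (Phi t) = Phi (s ++ t).
Proof.
rewrite /add (Phi_cat_l _ (preP (Phi_in s))).
exact: Phi_cat_r (preP (Phi_in t)).
Qed.

Lemma add_in a b : add a b \in G. Proof. exact: Phi_in. Qed.

Lemma addC a b : a \in G -> b \in G -> add a b = add b a.
Proof.
move=> /Phi_onto [s <-] /Phi_onto [t <-]; rewrite !addE.
exact: Phi_perm (permEl (perm_catC s t)).
Qed.

Lemma addA a b c : a \in G -> b \in G -> c \in G -> add a (add b c) = add (add a b) c.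
Proof.
move=> /Phi_onto [s <-] /Phi_onto [t <-] /Phi_onto [u <-]; by rewrite !addE catA.
Qed.

Lemma add1 a : a \in G -> add 1 a = a.
Proof. by move=> /Phi_onto [s <-]; rewrite -Phi_nil addE. Qed.

Lemma add1r a : a \in G -> add a 1 = a.
Proof. by move=> ha; rewrite addC ?add1. Qed.

Definition Lam (g h : {perm X}) := Phi (map g (pre h)).

Lemma Lam_in g h : Lam g h \in G. Proof. exact: Phi_in. Qed.

Lemma Phi_cat_map g t : g \in G -> add g (Phi (map g t)) = Phi t * g.
Proof.
move=> /Phi_onto [u <-]; rewrite addE Phi_cat (mapK (permK _)) //.
Qed.

Lemma mulE k g : k \in G -> g \in G -> k * g = add g (Lam g k).
Proof. by move=> hk hg; rewrite /Lam Phi_cat_map // preP. Qed.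

Definition neg g := Lam g g^-1.

Lemma addN g : g \in G -> add g (neg g) = 1.
Proof. by move=> hg; rewrite -mulE ?groupV // mulVg. Qed.

Lemma neg_in g : neg g \in G. Proof. exact: Lam_in. Qed.

Lemma add_cancel g x y : g \in G -> x \in G -> y \in G -> add g x = add g y -> x = y.
Proof.
move=> hg hx hy h.
rewrite -(add1 hx) -(add1 hy) -(addN hg) (addC hg (neg_in g)).
by rewrite -!addA ?neg_in // h.
Qed.

Lemma Lam_Phi g t : g \in G -> Lam g (Phi t) = Phi (map g t).
Proof.
move=> hg; apply: (add_cancel hg); rewrite ?Lam_in ?Phi_in //.
by rewrite -mulE ?Phi_in // Phi_cat_map.
Qed.

Lemma Lam_add g a b : g \in G -> a \in G -> b \in G ->
  Lam g (add a b) = add (Lam g a) (Lam g b).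
Proof.
move=> hg /Phi_onto [s <-] /Phi_onto [t <-].
by rewrite addE !Lam_Phi // map_cat addE.
Qed.

Lemma Lam_mul g k a : g \in G -> k \in G -> a \in G -> Lam (g * k) a = Lam k (Lam g a).
Proof.
move=> hg hk /Phi_onto [s <-].
rewrite !Lam_Phi ?groupM // -map_comp; congr Phi; apply: eq_map => x /=.
by rewrite permM.
Qed.

Lemma Lam1 a : a \in G -> Lam 1 a = a.
Proof.
move=> /Phi_onto [s <-]; rewrite Lam_Phi //; congr Phi.
by rewrite -[RHS]map_id; apply: eq_map => x; rewrite perm1.
Qed.

Lemma Lam_sp g x : g \in G -> Lam g (sp x) = sp (g x).
Proof. by move=> hg; rewrite -!Phi1 Lam_Phi. Qed.

Lemma Lam_one g : g \in G -> Lam g 1 = 1.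
Proof. by move=> hg; rewrite -Phi_nil Lam_Phi. Qed.

Lemma LamK g a : g \in G -> a \in G -> Lam g^-1 (Lam g a) = a.
Proof. by move=> hg ha; rewrite -Lam_mul ?groupV // mulgV Lam1. Qed.

Lemma LamKV g a : g \in G -> a \in G -> Lam g (Lam g^-1 a) = a.
Proof. by move=> hg ha; rewrite -Lam_mul ?groupV // mulVg Lam1. Qed.


Definition fT (b h : {perm X}) : {perm X} := if (b \in G) && (h \in G) then add b h else h.

Lemma fT_inj b : injective (fT b).
Proof.
move=> h h'; rewrite /fT; case hb: (b \in G) => //=.
case hh: (h \in G); case hh': (h' \in G) => //.
- exact: add_cancel.
- by move=> e; move: (add_in b h); rewrite e hh'.
- by move=> e; move: (add_in b h'); rewrite -e hh.
Qed.

Definition tau b : {perm {perm X}} := perm (@fT_inj b).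

Lemma tauE b h : b \in G -> h \in G -> tau b h = add b h.
Proof. by move=> hb hh; rewrite permE /fT hb hh. Qed.

Lemma tauN b h : h \notin G -> tau b h = h.
Proof. by move=> hh; rewrite permE /fT (negbTE hh) andbF. Qed.

Lemma tauM a b : a \in G -> b \in G -> tau a * tau b = tau (add a b).
Proof.
move=> ha hb; apply/permP => h; rewrite permM.
case hh: (h \in G); last by rewrite !tauN ?hh.
rewrite !tauE ?add_in // addA // (addC ha hb) //.
Qed.

Lemma tau1 : tau 1 = 1.
Proof.
apply/permP => h; rewrite perm1.
case hh: (h \in G); last by rewrite !tauN ?hh.
by rewrite tauE // add1.
Qed.

Lemma tau_inj a b : a \in G -> b \in G -> tau a = tau b -> a = b.
Proof.
move=> ha hb e; have := congr1 (fun f : {perm {perm X}} => f 1) e.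
by rewrite !tauE // !add1r.
Qed.

Definition fL (g h : {perm X}) : {perm X} := if (g \in G) && (h \in G) then Lam g h else h.

Lemma fL_inj g : injective (fL g).
Proof.
move=> h h'; rewrite /fL; case hg: (g \in G) => //=.
case hh: (h \in G); case hh': (h' \in G) => //.
- by move=> e; rewrite -(LamK hg hh) e LamK.
- by move=> e; move: (Lam_in g h); rewrite e hh'.
- by move=> e; move: (Lam_in g h'); rewrite -e hh.
Qed.

Definition LL g : {perm {perm X}} := perm (@fL_inj g).

Lemma LLE g h : g \in G -> h \in G -> LL g h = Lam g h.
Proof. by move=> hb hh; rewrite permE /fL hb hh. Qed.

Lemma LLN g h : h \notin G -> LL g h = h.
Proof. by move=> hh; rewrite permE /fL (negbTE hh) andbF. Qed.

Lemma LLV g : g \in G -> (LL g)^-1 = LL g^-1.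
Proof.
move=> hg.
have e : LL g * LL g^-1 = 1.
  apply/permP => h; rewrite permM perm1.
  case hh: (h \in G); last by rewrite !LLN ?hh.
  by rewrite !LLE ?groupV ?Lam_in // LamK.
by rewrite -[LL g^-1]mul1g -(mulVg (LL g)) -mulgA e mulg1.
Qed.

Lemma tauJ g c : g \in G -> c \in G -> tau (Lam g c) = tau c ^ LL g.
Proof.
move=> hg hc; apply/permP => h; rewrite conjgE !permM LLV //.
case hh: (h \in G); last by rewrite !tauN ?LLN ?hh.
have hgV : g^-1 \in G by rewrite groupV.
rewrite (LLE hgV) // (tauE hc (Lam_in _ _)) LLE ?add_in //.
by rewrite Lam_add ?Lam_in // LamKV // tauE ?Lam_in.
Qed.


Lemma main p (P : {group {perm X}}) : prime p -> p %| #|G| ->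
  P \in 'Syl_p(G) -> P <| G -> abelian P -> exists x y, x <> y /\ sp x = sp y.
Proof.
move=> pp pG hSyl nP abP.
have hP : p.-Hall(G) P by move: hSyl; rewrite inE.
have sPG : P \subset G := normal_sub nP.
pose T := [set tau b | b in G].
have Tgs : group_set T.
  apply/group_setP; split.
    by apply/imsetP; exists 1; rewrite ?group1 ?tau1.
  move=> _ _ /imsetP[a ha ->] /imsetP[b hb ->]; rewrite tauM //.
  by apply/imsetP; exists (add a b); rewrite ?add_in.
pose TG := Group Tgs.
have tauT b : b \in G -> tau b \in TG by move=> hb; apply/imsetP; exists b.
have abT : abelian TG.
  apply/centsP => _ /imsetP[a ha ->] _ /imsetP[b hb ->].
  by rewrite /commute !tauM // addC.
have cardT : #|TG| = #|G|.
  by apply: card_in_imset => a b ha hb; apply: tau_inj.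
have nilT := abelian_nil abT.
pose Q := 'O_p(TG)%G. pose Q' := 'O_p^'(TG)%G.
have hallQ : p.-Hall(TG) Q := nilpotent_pcore_Hall p nilT.
have hallQ' : p^'.-Hall(TG) Q' := nilpotent_pcore_Hall p^' nilT.
have memQ x : x \in TG -> (x \in Q) = p.-elt x.
  by move=> hx; apply: (mem_normal_Hall hallQ (pcore_normal _ _) hx).
have memQ' x : x \in TG -> (x \in Q') = p^'.-elt x.
  by move=> hx; apply: (mem_normal_Hall hallQ' (pcore_normal _ _) hx).
have dpr := nilpotent_pcoreC p nilT.
have [_ QQ' _ tI] := dprodP dpr.
pose Bp := [set b in G | tau b \in Q].
pose Bq := [set b in G | tau b \in Q'].
have BpLam g b : g \in G -> b \in Bp -> Lam g b \in Bp.
  move=> hg; rewrite !inE => /andP[hb hq]; rewrite Lam_in /= tauJ //.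
  by rewrite memQ ?p_eltJ -?memQ ?tauT // -tauJ // tauT ?Lam_in.
have BqLam g b : g \in G -> b \in Bq -> Lam g b \in Bq.
  move=> hg; rewrite !inE => /andP[hb hq]; rewrite Lam_in /= tauJ //.
  by rewrite memQ' ?p_eltJ -?memQ' ?tauT // -tauJ // tauT ?Lam_in.
have Bpgs : group_set Bp.
  apply/group_setP; split; first by rewrite inE group1 tau1 group1.
  move=> a b ha hb; have hb' := hb; have ha' := ha.
  move: ha' hb'; rewrite !inE => /andP[haG haQ] /andP[hbG hbQ].
  rewrite mulE // add_in /= -tauM ?Lam_in // groupM //.
  by have := BpLam b a hbG ha; rewrite inE => /andP[].
pose BpG := Group Bpgs.
have BpP : Bp = P.
  apply/eqP; rewrite eqEcard.
  have sBpG : BpG \subset G by apply/subsetP => b; rewrite inE => /andP[].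
  have cBp : #|Bp| = #|Q|.
    have -> : (Q : {set _}) = tau @: Bp.
      apply/eqP; rewrite eqEsubset; apply/andP; split.
        apply/subsetP => x hx.
        have : x \in TG := subsetP (pcore_sub p TG) x hx.
        case/imsetP => b hb ex; apply/imsetP; exists b => //.
        by rewrite inE hb -ex.
      by apply/subsetP => _ /imsetP[b hb ->]; move: hb; rewrite inE => /andP[].
    by rewrite card_in_imset // => a b; rewrite !inE => /andP[ha _] /andP[hb _]; apply: tau_inj.
  have cP : #|P| = #|Bp| by rewrite cBp (card_Hall hallQ) (card_Hall hP) cardT.
  rewrite cP leqnn andbT.
  have : BpG \subset P.
    rewrite (sub_normal_Hall hP nP sBpG) /pgroup.
    by rewrite -cP (card_Hall hP) part_pnat.
  by [].
have Q1 : forall x1 y1 x2 y2, x1 \in Bp -> y1 \in Bq -> x2 \in Bp -> y2 \in Bq ->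
    add x1 y1 = add x2 y2 -> y1 = y2.
  move=> x1 y1 x2 y2; rewrite !inE => /andP[hx1 qx1] /andP[hy1 qy1]
    /andP[hx2 qx2] /andP[hy2 qy2] e.
  have e1 : tau x1 * tau y1 = tau x2 * tau y2 by rewrite !tauM // e.
  have e2 : (tau x2)^-1 * tau x1 = tau y2 * (tau y1)^-1.
    by rewrite -(mulgK (tau y1) (tau x1)) e1 -!mulgA mulKg.
  have : tau y2 * (tau y1)^-1 \in Q :&: Q'.
    rewrite inE; apply/andP; split; first by rewrite -e2 groupM ?groupV.
    by rewrite groupM ?groupV.
  rewrite tI inE -eq_mulgV1 => /eqP e3.
  by apply: tau_inj.
have hA : forall a c, a \in P -> c \in Bq -> Lam a c = c.
  move=> a c ha hc.
  have hcG : c \in G by move: hc; rewrite inE => /andP[].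
  pose a0 := a ^ c^-1.
  have ha0 : a0 \in P by rewrite memJ_norm // groupV (subsetP (normal_norm nP)).
  have ha0G : a0 \in G := subsetP sPG _ ha0.
  have haG : a \in G := subsetP sPG _ ha.
  have e : a0 * c = c * a by rewrite /a0 conjgE invgK -!mulgA mulVg mulg1.
  move: e; rewrite mulE // mulE // (addC hcG (Lam_in _ _)) => e.
  apply/esym; apply: (Q1 _ _ _ _ _ _ _ _ e).
  - by apply: BpLam => //; rewrite BpP.
  - by [].
  - by rewrite BpP.
  - exact: BqLam.
pose lact (h g : {perm X}) := LL g h.
have isa : is_action G lact.
  split; first by move=> g h h'; apply: perm_inj.
  move=> h g k hg hk; rewrite /lact.
  case hh: (h \in G); last by rewrite !LLN ?hh.
  by rewrite !LLE ?groupM ?Lam_in // Lam_mul.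
pose to := Action isa.
have actsPP : [acts P, on (P : {set _}) | to].
  apply/subsetP => g hg; rewrite inE (subsetP sPG) //= inE.
  apply/subsetP => h hh; rewrite inE /= /lact LLE ?(subsetP sPG) //.
  by rewrite -BpP BpLam ?(subsetP sPG) // BpP.
have pP : p.-group P := pHall_pgroup hP.
have fm := pgroup_fix_mod pP actsPP.
have pdP : p %| #|P|.
  rewrite (card_Hall hP) p_part; apply: dvdn_exp; last exact: dvdnn.
  by rewrite logn_gt0 mem_primes pp cardG_gt0 pG.
have fix1 : (1 : {perm X}) \in 'Fix_((P : {set _}) | to)(P).
  rewrite inE group1; apply/afixP => a ha /=.
  by rewrite /lact LLE ?(subsetP sPG) // Lam_one ?(subsetP sPG).
have pdF : p %| #|'Fix_((P : {set _}) | to)(P)|.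
  by rewrite /dvdn -fm; apply: pdP.
have : 1 < #|'Fix_((P : {set _}) | to)(P)|.
  apply: leq_trans (prime_gt1 pp) (dvdn_leq _ pdF).
  by apply/card_gt0P; exists 1.
case/card_gt1P => x [y [hx hy hxy]].
have [b [hbF hb1]] : exists b, b \in 'Fix_((P : {set _}) | to)(P) /\ b != 1.
  case: (eqVneq x 1) => [ex|]; last by exists x.
  by exists y; split => //; rewrite -ex eq_sym.
move: hbF; rewrite inE => /andP[hbP /afixP hfix].
have hbG : b \in G := subsetP sPG _ hbP.
have hB : forall a, a \in P -> Lam b a = a.
  move=> a ha; have haG : a \in G := subsetP sPG _ ha.
  have e : a * b = b * a := (centsP abP) a ha b hbP.
  move: e; rewrite mulE // mulE //.
  have := hfix a ha; rewrite /= /lact LLE // => ->.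
  rewrite (addC haG hbG) => e; apply: add_cancel e; rewrite ?Lam_in //.
have hC : forall c, c \in G -> Lam b c = c.
  move=> c hc.
  have : tau c \in Q * Q' by rewrite QQ' tauT.
  case/mulsgP => x1 y1 hx1 hy1 ec.
  have : x1 \in TG := subsetP (pcore_sub p TG) x1 hx1.
  case/imsetP => cp hcp ex1.
  have : y1 \in TG := subsetP (pcore_sub p^' TG) y1 hy1.
  case/imsetP => cq hcq ey1.
  have ecc : c = add cp cq by apply: tau_inj; rewrite ?add_in // -tauM // -ex1 -ey1.
  have hcpP : cp \in P by rewrite -BpP inE hcp -ex1.
  have hcqB : cq \in Bq by rewrite inE hcq -ey1.
  by rewrite ecc Lam_add // hB // hA.
clear x y hx hy hxy.
case: (pickP (fun x => b x != x)) => [x hx | h].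
  exists x, (b x); split; first by move=> e; move: hx; rewrite -e eqxx.
  by rewrite -Lam_sp // hC // sp_in.
case/eqP: hb1; apply/permP => x; rewrite perm1.
by move: (h x) => /negbFE/eqP.
Qed.

End YB.

Theorem lemma3p5 (X : finType) (r : X * X -> X * X) (p : nat) :
  is_YB_solution r ->
  prime p -> p %| #|perm_group_YB r| ->
  (exists P : {group {perm X}},
      [/\ P \in 'Syl_p(perm_group_YB r), P <| perm_group_YB r & abelian P]%g) ->
  retractable r.
Proof.
case=> _ hinv hsig _ hybe pp pG [P [hS nP abP]].
have [x [y [hxy e]]] := main hinv hsig hybe pp pG hS nP abP.
exists x, y; split => //; apply: functional_extensionality => z.
by rewrite -!spE e.
Qed.
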